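(* Let $(B^{*,*},\delta_h,\delta_v)$ be a bicomplex of vector spaces ($\delta_h:B^{p,q}\to B^{p+1,q}$, $\delta_v:B^{p,q}\to B^{p,q+1}$, $\delta_h^2=\delta_v^2=\delta_h\delta_v+\delta_v\delta_h=0$) such that (i) $B^{p,q}=0$ unless $0\le -p\le q$, (ii) $B^{p,*}=0$ for $p$ sufficiently negative, and (iii) $H^p(B^{*,q},\delta_h)=0$ whenever $p+q\ne0$. Let $Z_h^n$, $D^n$, $\pi_n$, $X^n$, $U$ and $\beta$ be as in the context. Then for each $n\geq 0$ and $z\in Z_h^n$, the element $\beta(z)\in\bigoplus_{p\geq n}B^{-p,p}$ is a degree $0$ cocycle of the total complex $(B^*,\delta_h+\delta_v)$, $B^k=\bigoplus_{p+q=k}B^{p,q}$. Consequently, for every $z\in Z_h^n$, $\beta(z)$ is a cocycle of the total complex with $\beta(z)-z\in\bigoplus_{p>n}B^{-p,p}$.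
   Context: $Z_h^n:=\ker(\delta_h:B^{-n,n}\to B^{-n+1,n})$. For each $n\ge0$ choose a complementary subspace $D^n$ with $B^{-n,n}=Z_h^n\oplus D^n$, and let $\pi_n:B^{-n,n}\to D^n$ be the projection along $Z_h^n$. Let $X^n:=\ker(\delta_v\delta_h:B^{-n,n}\to B^{-n+1,n+1})$. For $x\in X^n$ define $U(x):=\pi_{n+1}(u)$ where $u\in B^{-n-1,n+1}$ is any element with $\delta_h u=\delta_v x$ (such $u$ exists and $U(x)$ does not depend on its choice, and $U(x)\in X^{n+1}$). For $z\in Z_h^n$ define $\beta(z):=z-U(z)+U^2(z)-U^3(z)+\cdots$ (a finite sum). *)

(* Defs.v *)
From HB Require Import structures.
From mathcomp Require Import all_boot all_order all_algebra.
From mathcomp Require Import zify.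
From Stdlib Require Import ClassicalEpsilon.
Set Implicit Arguments. Unset Strict Implicit. Unset Printing Implicit Defensive.
Import Order.TTheory GRing.Theory Num.Theory.
Local Open Scope ring_scope.

Section Bicomplex.
Variable K : fieldType.
Variable B : int -> int -> lmodType K.

Definition castB (p p' q q' : int) (ep : p = p') (eq : q = q') (x : B p q) : B p' q' :=
  eq_rect p (fun p0 => B p0 q') (eq_rect q (fun q0 => B p q0) x q' eq) p' ep.

Definition Bd (n : nat) := B (- (n%:Z)) (n%:Z).

Definition castBd (m m' : nat) (e : m = m') (x : Bd m) : Bd m' :=
  eq_rect m Bd x m' e.

Variable dh : forall p q : int, {linear B p q -> B (p + 1) q}.
Variable dv : forall p q : int, {linear B p q -> B p (q + 1)}.

(* projection pi_n : B^{-n,n} -> D^n along Z_h^n (D^n = image of pi_n) *)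
Variable pi : forall n : nat, {linear Bd n -> Bd n}.

Lemma U_e1 (n : nat) : - (n.+1%:Z) + 1 = - (n%:Z).
Proof. lia. Qed.
Lemma U_e2 (n : nat) : (n.+1)%:Z = n%:Z + 1.
Proof. lia. Qed.

Definition U (n : nat) (x : Bd n) : Bd n.+1 :=
  pi n.+1 (epsilon (inhabits (0 : Bd n.+1))
    (fun u : Bd n.+1 => castB (U_e1 n) (U_e2 n) (dh _ _ u) = dv _ _ x)).

Fixpoint Uiter (n k : nat) : Bd n -> Bd (k + n)%N :=
  match k return Bd n -> Bd (k + n)%N with
  | 0 => fun z => z
  | k'.+1 => fun z => @U (k' + n)%N (@Uiter n k' z)
  end.

Definition beta (n : nat) (z : Bd n) : forall m : nat, Bd m :=
  fun m =>
    (if (n <= m)%N as b return (n <= m)%N = b -> Bd m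
     then fun h => castBd (subnK h) ((-1) ^+ (m - n)%N *: @Uiter n (m - n)%N z)
     else fun _ => 0) erefl.

Definition tot (k : int) := forall p : int, B p (k - p).

Lemma dtot_e1 (k p : int) : k - p + 1 = k + 1 - p. Proof. lia. Qed.
Lemma dtot_e2 (p : int) : p - 1 + 1 = p. Proof. lia. Qed.
Lemma dtot_e3 (k p : int) : k - (p - 1) = k + 1 - p. Proof. lia. Qed.

Definition dtot (k : int) (c : tot k) : tot (k + 1) :=
  fun p => castB erefl (dtot_e1 k p) (dv p (k - p) (c p))
         + castB (dtot_e2 p) (dtot_e3 k p) (dh (p - 1) (k - (p - 1)) (c (p - 1))).

Definition is_cocycle (k : int) (c : tot k) : Prop := forall p, dtot c p = 0.

Lemma diag_e1 (p : int) : p <= 0 -> - ((absz p)%:Z) = p.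
Proof. lia. Qed.
Lemma diag_e2 (p : int) : p <= 0 -> (absz p)%:Z = 0 - p.
Proof. lia. Qed.

Definition diag_tot (d : forall m : nat, Bd m) : tot 0 :=
  fun p =>
    (if p <= 0 as b return (p <= 0) = b -> B p (0 - p)
     then fun h => castB (diag_e1 h) (diag_e2 h) (d (absz p))
     else fun _ => 0) erefl.

End Bicomplex.

(* Main.v *)
Require Import Defs.
From HB Require Import structures.
From mathcomp Require Import all_boot all_order all_algebra.
From mathcomp Require Import zify.
From Stdlib Require Import ClassicalEpsilon.
Set Implicit Arguments. Unset Strict Implicit. Unset Printing Implicit Defensive.
Import Order.TTheory GRing.Theory Num.Theory.
Local Open Scope ring_scope.

Section Casts.
Variable K : fieldType.
Variable B : int -> int -> lmodType K.

Lemma castB_irr p p' q q' (e1 e1' : p = p') (e2 e2' : q = q') (x : B p q) :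
  castB e1 e2 x = castB e1' e2' x.
Proof. by rewrite (eq_irrelevance e1 e1') (eq_irrelevance e2 e2'). Qed.

Lemma castB_id p q (e1 : p = p) (e2 : q = q) (x : B p q) : castB e1 e2 x = x.
Proof. by rewrite (castB_irr e1 erefl e2 erefl). Qed.

Lemma castB_comp p p' p'' q q' q'' (e1 : p = p') (e2 : q = q') (e3 : p' = p'') (e4 : q' = q'')
  (x : B p q) : castB e3 e4 (castB e1 e2 x) = castB (etrans e1 e3) (etrans e2 e4) x.
Proof. by case: p'' / e3; case: q'' / e4; case: p' / e1; case: q' / e2. Qed.

Lemma castB0 p p' q q' (e1 : p = p') (e2 : q = q') : castB e1 e2 (0 : B p q) = 0.
Proof. by case: p' / e1; case: q' / e2. Qed.

Lemma castBD p p' q q' (e1 : p = p') (e2 : q = q') (x y : B p q) :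
  castB e1 e2 (x + y) = castB e1 e2 x + castB e1 e2 y.
Proof. by case: p' / e1; case: q' / e2. Qed.

Lemma castBZ p p' q q' (e1 : p = p') (e2 : q = q') a (x : B p q) :
  castB e1 e2 (a *: x) = a *: castB e1 e2 x.
Proof. by case: p' / e1; case: q' / e2. Qed.

Lemma castB_eq0 p p' q q' (e1 : p = p') (e2 : q = q') (x : B p q) :
  castB e1 e2 x = 0 -> x = 0.
Proof. by case: p' / e1; case: q' / e2. Qed.

Lemma castBd_B m m' (e : m = m') (x : Bd B m) :
  castBd e x = castB (f_equal (fun k : nat => - (k%:Z)) e) (f_equal (fun k : nat => k%:Z) e) x.
Proof. by case: m' / e. Qed.

Lemma castBd_id m (e : m = m) (x : Bd B m) : castBd e x = x.
Proof. by rewrite (eq_irrelevance e erefl). Qed.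

Variable dh : forall p q : int, {linear B p q -> B (p + 1) q}.
Variable dv : forall p q : int, {linear B p q -> B p (q + 1)}.

Lemma dh_cast p p' q q' (e1 : p = p') (e2 : q = q') (x : B p q) :
  dh p' q' (castB e1 e2 x) = castB (f_equal (fun k => k + 1) e1) e2 (dh p q x).
Proof. by case: p' / e1; case: q' / e2. Qed.

Lemma dv_cast p p' q q' (e1 : p = p') (e2 : q = q') (x : B p q) :
  dv p' q' (castB e1 e2 x) = castB e1 (f_equal (fun k => k + 1) e2) (dv p q x).
Proof. by case: p' / e1; case: q' / e2. Qed.

Lemma dep_if_true (c : bool) (T : Type) (f : c = true -> T) (g : c = false -> T) (h : c = true) :
  (if c as b return c = b -> T then f else g) erefl = f h.
Proof. by move: f g h; case: c => f g h //; rewrite (eq_irrelevance h erefl). Qed.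

Lemma dep_if_false (c : bool) (T : Type) (f : c = true -> T) (g : c = false -> T) (h : c = false) :
  (if c as b return c = b -> T then f else g) erefl = g h.
Proof. by move: f g h; case: c => f g h //; rewrite (eq_irrelevance h erefl). Qed.

End Casts.

Section Diag.
Variable K : fieldType.
Variable B : int -> int -> lmodType K.

Lemma diag_tot_at (d : forall m, Bd B m) p (m : nat) (e1 : -(m%:Z) = p) (e2 : m%:Z = 0 - p) :
  diag_tot d p = castB e1 e2 (d m).
Proof.
have h : (p <= 0) = true by apply/idP; lia.
rewrite /diag_tot (dep_if_true _ _ h).
move: (diag_e1 h) (diag_e2 h).
have em : absz p = m by lia.
rewrite em => a b; apply: castB_irr.
Qed.

Lemma combine P Q p1 q1 p2 q2 (E1 : p2 = p1) (E2 : q2 = q1) (A1 : p1 = P) (A2 : q1 = Q)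
  (A3 : p2 = P) (A4 : q2 = Q) (y : B p1 q1) (w : B p2 q2) :
  y + castB E1 E2 w = 0 -> castB A1 A2 y + castB A3 A4 w = 0.
Proof.
move=> H.
by rewrite (castB_irr A3 (etrans E1 A1) A4 (etrans E2 A2)) -castB_comp -castBD H castB0.
Qed.
End Diag.
Section Main.
Variable K : fieldType.
Variable B : int -> int -> lmodType K.
Variable dh : forall p q : int, {linear B p q -> B (p + 1) q}.
Variable dv : forall p q : int, {linear B p q -> B p (q + 1)}.
Hypothesis dv2 : forall p q (x : B p q), dv p (q + 1) (dv p q x) = 0.
Hypothesis anti : forall p q (x : B p q), dh p (q + 1) (dv p q x) + dv (p + 1) q (dh p q x) = 0.
Hypothesis exact : forall (p q : int) (x : B (p + 1) q), p + 1 + q != 0 ->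
     dh (p + 1) q x = 0 -> exists y : B p q, dh p q y = x.
Variable pi : forall n : nat, {linear Bd B n -> Bd B n}.
Hypothesis pi_idem : forall n (x : Bd B n), pi n (pi n x) = pi n x.
Hypothesis pi_ker : forall n (x : Bd B n), pi n x = 0 <-> dh _ _ x = 0.

Lemma U_spec m (x : Bd B m) : dv _ _ (dh _ _ x) = 0 ->
  castB (U_e1 m) (U_e2 m) (dh _ _ (U dh dv pi x)) = dv _ _ x.
Proof.
move=> hx.
pose p := - (m.+1%:Z). pose q := m.+1%:Z.
have ex : exists u : Bd B m.+1, castB (U_e1 m) (U_e2 m) (dh _ _ u) = dv _ _ x.
  pose v : B (p + 1) q := castB (esym (U_e1 m)) (esym (U_e2 m)) (dv _ _ x).
  have hv : dh (p + 1) q v = 0.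
    rewrite /v dh_cast.
    have -> : dh _ _ (dv _ _ x) = 0.
      by apply/eqP; rewrite -(addr0 (dh _ _ _)) -hx -(subr_eq0) addrK; apply/eqP; rewrite -[X in X = _]addr0 -{1}hx; apply: anti.
    by rewrite castB0.
  have [|y hy] := @exact p q v _ hv; first by rewrite /p /q; apply/eqP; lia.
  by exists y; rewrite hy /v castB_comp castB_id.
have := epsilon_spec (inhabits (0 : Bd B m.+1))
   (fun u : Bd B m.+1 => castB (U_e1 m) (U_e2 m) (dh _ _ u) = dv _ _ x) ex.
rewrite /U. set u := epsilon _ _ => hu.
suff -> : dh _ _ (pi m.+1 u) = dh _ _ u by [].
have h0 : pi m.+1 (u - pi m.+1 u) = 0 by rewrite linearB pi_idem subrr.
move/pi_ker: h0; rewrite linearB => /eqP; rewrite subr_eq0 => /eqP.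
by move=> ->.
Qed.


Variable n : nat.
Variable z : Bd B n.
Hypothesis hz : dh _ _ z = 0.

Lemma Uiter_X k : dv _ _ (dh _ _ (Uiter dh dv pi k z)) = 0.
Proof.
elim: k => [|k IH] /=; first by rewrite hz linear0.
have hU := U_spec IH.
have -> : dh _ _ (U dh dv pi (Uiter dh dv pi k z)) =
   castB (esym (U_e1 (k + n))) (esym (U_e2 (k + n))) (dv _ _ (Uiter dh dv pi k z)).
  by rewrite -hU castB_comp castB_id.
by rewrite dv_cast dv2 castB0.
Qed.

Lemma beta_lt m : (m < n)%N -> beta dh dv pi z m = 0.
Proof.
move=> h; rewrite /beta.
have h' : (n <= m)%N = false by apply/negbTE; rewrite -ltnNge.
by rewrite (dep_if_false _ _ h').
Qed.

Lemma beta_ge k : beta dh dv pi z (k + n) = (-1) ^+ k *: Uiter dh dv pi k z.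
Proof.
rewrite /beta.
have h : (n <= k + n)%N = true by rewrite leq_addl.
rewrite (dep_if_true _ _ h).
move: (subnK h).
rewrite addnK => e.
by rewrite castBd_id.
Qed.

Lemma beta_n : beta dh dv pi z n = z.
Proof. by have := beta_ge 0; rewrite expr0 scale1r. Qed.

Lemma inner m : dv _ _ (beta dh dv pi z m)
   + castB (U_e1 m) (U_e2 m) (dh _ _ (beta dh dv pi z m.+1)) = 0.
Proof.
case: (ltnP m n) => h.
  rewrite beta_lt // linear0 add0r.
  case: (ltnP m.+1 n) => h2; first by rewrite beta_lt // linear0 castB0.
  have e : m.+1 = n by apply/eqP; rewrite eqn_leq h h2.
  by move: (U_e1 m) (U_e2 m); rewrite e beta_n => a b; rewrite hz castB0.
have [k ->] : exists k, m = (k + n)%N by exists (m - n)%N; rewrite subnK.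
rewrite beta_ge.
have -> : beta dh dv pi z (k + n).+1 = (-1) ^+ k.+1 *: U dh dv pi (Uiter dh dv pi k z).
  exact: (beta_ge k.+1).
rewrite !linearZ castBZ /= (U_spec (Uiter_X k)).
by rewrite exprS mulN1r scaleNr addrN.
Qed.

End Main.
Theorem lemma5p2 (K : fieldType) (B : int -> int -> lmodType K)
  (dh : forall p q : int, {linear B p q -> B (p + 1) q})
  (dv : forall p q : int, {linear B p q -> B p (q + 1)})
  (dh2 : forall p q (x : B p q), dh (p + 1) q (dh p q x) = 0)
  (dv2 : forall p q (x : B p q), dv p (q + 1) (dv p q x) = 0)
  (anti : forall p q (x : B p q), dh p (q + 1) (dv p q x) + dv (p + 1) q (dh p q x) = 0)
  (vanish : forall p q (x : B p q), ~~ ((0 <= - p) && (- p <= q)) -> x = 0)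
  (bounded : exists N : int, forall p q (x : B p q), p < N -> x = 0)
  (exact : forall (p q : int) (x : B (p + 1) q), p + 1 + q != 0 ->
     dh (p + 1) q x = 0 -> exists y : B p q, dh p q y = x)
  (pi : forall n : nat, {linear Bd B n -> Bd B n})
  (pi_idem : forall n (x : Bd B n), pi n (pi n x) = pi n x)
  (pi_ker : forall n (x : Bd B n), pi n x = 0 <-> dh _ _ x = 0)
  (n : nat) (z : Bd B n) (hz : dh _ _ z = 0) :
  let b := @beta K B dh dv pi n z in
  @is_cocycle K B dh dv 0 (@diag_tot K B b)
  /\ (exists N : nat, forall m : nat, (N <= m)%N -> b m = 0)
  /\ b n = z
  /\ (forall m : nat, (m < n)%N -> b m = 0).
Proof.
move=> b; split; last split; last split.
- move=> p; rewrite /dtot.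
  case: (lerP p 0) => hp.
    pose m := absz p.
    have e1 : - (m%:Z) = p by rewrite /m; lia.
    have e2 : m%:Z = 0 - p by rewrite /m; lia.
    have e1' : - (m.+1%:Z) = p - 1 by rewrite /m; lia.
    have e2' : m.+1%:Z = 0 - (p - 1) by rewrite /m; lia.
    rewrite (diag_tot_at _ e1 e2) (diag_tot_at _ e1' e2') dv_cast dh_cast.
    rewrite !castB_comp.
    refine (@combine K B _ _ _ _ _ _ (U_e1 m) (U_e2 m) _ _ _ _ _ _ _).
    exact: (inner dv2 anti exact pi_idem pi_ker hz m).
  apply: vanish; apply/negP => /andP [h1 _]; lia.
- case: bounded => N hN.
  exists (absz N).+1 => m hm; apply: hN; lia.
- exact: beta_n.
- move=> m hm; exact: beta_lt.
Qed.
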